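(* For every integer $h \geq 3$ and every positive integer $N$, \[ \psi(N,h,h) \geq \frac{1}{\cos(\pi/h)} \left( \frac{4}{3 - \cos(\pi/h)} - 1 \right). \]
   Context: $[N] = \{1,2,\dots,N\}$. For positive integers $K$ and $h \geq 3$, let $\mathcal{F}_{K,h}$ be the set of all functions $F(x) = \sum_{j=1}^K b_j \cos(jx)$ with real coefficients satisfying $\sum_{j=1}^K |b_j| = \frac{1}{\cos(\pi/h)}$. For nonempty $A \subseteq [N]$ and $F \in \mathcal{F}_{K,h}$ let $w_F(A) = \sum_{a \in A} F\!\left( \left(a - \frac{N+1}{2}\right) \frac{2\pi}{hN} \right)$, and let \[ \psi(N,K,h) = \min_{\emptyset \neq A \subseteq [N]} \sup \left\{ \frac{w_F(A)}{|A|} : F \in \mathcal{F}_{K,h} \right\}. \] *)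

(* Defs.v *)
From Stdlib Require Import Reals List.
Import ListNotations.
Open Scope R_scope.

Fixpoint sum1 (K : nat) (f : nat -> R) : R :=
  match K with
  | O => 0
  | S k => sum1 k f + f (S k)
  end.

(* F(x) = sum_{j=1}^K b_j cos(j x), F given by its coefficient sequence b (b_j for j = 1..K). *)
Definition Fval (K : nat) (b : nat -> R) (x : R) : R :=
  sum1 K (fun j => b j * cos (INR j * x)).

Definition in_FKh (K h : nat) (b : nat -> R) : Prop :=
  sum1 K (fun j => Rabs (b j)) = 1 / cos (PI / INR h).

(* A nonempty subset A of [N] = {1..N}, represented by a duplicate-free list. *)
Definition nonempty_subset_N (N : nat) (A : list nat) : Prop :=
  A <> [] /\ NoDup A /\ (forall a, In a A -> (1 <= a <= N)%nat).

Definition wF (N K h : nat) (b : nat -> R) (A : list nat) : R :=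
  fold_right
    (fun a acc => Fval K b ((INR a - (INR N + 1) / 2) * (2 * PI / (INR h * INR N))) + acc)
    0 A.

Definition ratio_set (N K h : nat) (A : list nat) (r : R) : Prop :=
  exists b, in_FKh K h b /\ r = wF N K h b A / INR (length A).

(* psi(N,K,h) >= c, i.e. min over nonempty A ⊆ [N] of sup(ratio_set A) >= c,
   unfolded: for every nonempty A, every upper bound of ratio_set A is >= c
   (equivalently sup(ratio_set A) >= c). *)
Definition psi_ge (N K h : nat) (c : R) : Prop :=
  forall A, nonempty_subset_N N A ->
    forall u, is_upper_bound (ratio_set N K h A) u -> c <= u.

(* Main.v *)
Require Import Defs.
From Stdlib Require Import Reals List Lra Lia.
Import ListNotations.
Open Scope R_scope.

Lemma cos_le_dec x y : 0 <= x -> x <= y -> y <= PI -> cos y <= cos x.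
Proof.
  intros. destruct (Req_dec x y) as [->|Hne]; [lra|].
  left; apply cos_decreasing_1; lra.
Qed.

Fixpoint Dk (n : nat) (v : R) : R :=
  match n with
  | O => 0
  | S m => Dk m v * cos v + cos (INR m * v)
  end.

Lemma Dk_sin n v : sin (INR n * v) = sin v * Dk n v.
Proof.
  induction n as [|n IH]; simpl Dk.
  - simpl. rewrite Rmult_0_l, sin_0. ring.
  - rewrite S_INR. replace ((INR n + 1) * v) with (INR n * v + v) by ring.
    rewrite sin_plus, IH. ring.
Qed.

Lemma Dk_mono n : forall v w, 0 <= v -> v <= w -> INR n * w <= PI / 2 ->
  0 <= Dk n w /\ Dk n w <= Dk n v.
Proof.
  induction n as [|n IH]; intros v w Hv Hvw Hw.
  - simpl; lra.
  - simpl Dk. rewrite S_INR in Hw.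
    assert (Hn0 := pos_INR n).
    assert (Hw1 : w <= PI / 2) by nra.
    assert (Hnw : INR n * w <= PI / 2) by nra.
    destruct (IH v w Hv Hvw Hnw) as [H1 H2].
    assert (PI2 := PI_RGT_0).
    assert (cw : 0 <= cos w) by (apply cos_ge_0; lra).
    assert (cvw : cos w <= cos v) by (apply cos_le_dec; lra).
    assert (cnw : 0 <= cos (INR n * w)) by (apply cos_ge_0; nra).
    assert (cnvw : cos (INR n * w) <= cos (INR n * v)).
    { apply cos_le_dec; nra. }
    split; nra.
Qed.

Lemma key_ineq (h : nat) (x : R) : (1 <= h)%nat -> Rabs x <= PI / INR h ->
  (1 + cos (PI / INR h)) / 2 + (1 - cos (PI / INR h)) / 2 * cos (INR h * x) <= cos x.
Proof.
  intros Hh Hx.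
  assert (Hhp : 0 < INR h) by (apply lt_0_INR; lia).
  assert (PI2 := PI_RGT_0).
  set (v := Rabs x / 2). set (phi := PI / (2 * INR h)).
  assert (Hv0 : 0 <= v) by (unfold v; assert (H := Rabs_pos x); lra).
  assert (Hvphi : v <= phi).
  { unfold v, phi. replace (PI / (2 * INR h)) with ((PI / INR h) / 2) by (field; lra). lra. }
  assert (Hhphi : INR h * phi = PI / 2) by (unfold phi; field; lra).
  destruct (Dk_mono h v phi Hv0 Hvphi (Req_le _ _ Hhphi)) as [_ HD].
  assert (Hs1 : sin phi * Dk h phi = 1).
  { rewrite <- Dk_sin, Hhphi. apply sin_PI2. }
  assert (Hphi0 : 0 <= phi) by lra.
  assert (Hh1 : 1 <= INR h) by (assert (H3 := le_INR 1 h ltac:(lia)); simpl in H3; lra).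
  assert (Hphi_le : phi <= PI / 2) by nra.
  assert (Hsv : 0 <= sin v) by (apply sin_ge_0; lra).
  assert (Hsphi : 0 <= sin phi) by (apply sin_ge_0; lra).
  assert (Hmain : sin v <= sin phi * sin (INR h * v)).
  { rewrite Dk_sin.
    assert (0 <= (sin v * sin phi) * (Dk h v - Dk h phi)) by (apply Rmult_le_pos; nra).
    nra. }
  assert (Hhv : 0 <= sin (INR h * v)).
  { apply sin_ge_0; nra. }
  assert (Hsq : sin v * sin v <= (sin phi * sin (INR h * v)) * (sin phi * sin (INR h * v))) by nra.
  assert (E1 : cos x = 1 - 2 * sin v * sin v).
  { rewrite <- cos_2a_sin. replace (2 * v) with (Rabs x) by (unfold v; field).
    unfold Rabs; destruct (Rcase_abs x); [rewrite cos_neg|]; reflexivity. }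
  assert (E2 : cos (PI / INR h) = 1 - 2 * sin phi * sin phi).
  { rewrite <- cos_2a_sin. f_equal. unfold phi; field; lra. }
  assert (E3 : cos (INR h * x) = 1 - 2 * sin (INR h * v) * sin (INR h * v)).
  { rewrite <- cos_2a_sin. replace (2 * (INR h * v)) with (INR h * Rabs x) by (unfold v; field).
    unfold Rabs; destruct (Rcase_abs x); [|reflexivity].
    replace (INR h * - x) with (- (INR h * x)) by ring. rewrite cos_neg; reflexivity. }
  rewrite E1, E2, E3. nra.
Qed.

Definition Lsum (f : nat -> R) (A : list nat) : R :=
  fold_right (fun a acc => f a + acc) 0 A.

Lemma Lsum_le f g A : (forall a, In a A -> f a <= g a) -> Lsum f A <= Lsum g A.
Proof.
  induction A as [|x A IH]; intros H; simpl; [lra|].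
  assert (f x <= g x) by (apply H; left; auto).
  assert (Lsum f A <= Lsum g A) by (apply IH; intros; apply H; right; auto).
  unfold Lsum in *; lra.
Qed.

Lemma Lsum_ext f g A : (forall a, f a = g a) -> Lsum f A = Lsum g A.
Proof. induction A as [|x A IH]; intros H; simpl; auto. unfold Lsum in *; rewrite H, IH; auto. Qed.

Lemma Lsum_lin c d f A : Lsum (fun a => c + d * f a) A = c * INR (length A) + d * Lsum f A.
Proof.
  induction A as [|x A IH].
  - unfold Lsum; simpl. ring.
  - change (length (x :: A)) with (S (length A)). rewrite S_INR.
    change (Lsum (fun a => c + d * f a) (x :: A)) with (c + d * f x + Lsum (fun a => c + d * f a) A).
    change (Lsum f (x :: A)) with (f x + Lsum f A). rewrite IH. ring.
Qed.

Lemma Lsum_scal d f A : Lsum (fun a => d * f a) A = d * Lsum f A.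
Proof.
  rewrite (Lsum_ext _ (fun a => 0 + d * f a)) by (intros; ring).
  rewrite Lsum_lin; ring.
Qed.

Lemma sum1_ext K f g : (forall j, f j = g j) -> sum1 K f = sum1 K g.
Proof. induction K; intros H; simpl; auto. rewrite IHK, H; auto. Qed.

Lemma sum1_zero_gt K k c : (K < k)%nat -> sum1 K (fun j => if Nat.eqb j k then c else 0) = 0.
Proof.
  induction K; intros H; cbn [sum1]; auto.
  rewrite IHK by lia. destruct (Nat.eqb_spec (S K) k); [lia|]. ring.
Qed.

Lemma sum1_single K k c : (1 <= k <= K)%nat -> sum1 K (fun j => if Nat.eqb j k then c else 0) = c.
Proof.
  induction K; intros H; [lia|]. cbn [sum1].
  destruct (Nat.eqb_spec (S K) k).
  - subst. rewrite sum1_zero_gt by lia. ring.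
  - rewrite IHK by lia. ring.
Qed.

Definition bsingle (k : nat) (c : R) : nat -> R := fun j => if Nat.eqb j k then c else 0.

Lemma in_FKh_single K h k c : (1 <= k <= K)%nat -> Rabs c = 1 / cos (PI / INR h) ->
  in_FKh K h (bsingle k c).
Proof.
  intros Hk Hc. unfold in_FKh, bsingle.
  rewrite (sum1_ext _ _ (fun j => if Nat.eqb j k then Rabs c else 0)).
  - rewrite <- Hc. apply sum1_single; auto.
  - intros j; destruct (Nat.eqb j k); auto. apply Rabs_R0.
Qed.

Lemma Fval_single K k c x : (1 <= k <= K)%nat -> Fval K (bsingle k c) x = c * cos (INR k * x).
Proof.
  intros Hk. unfold Fval, bsingle.
  rewrite (sum1_ext _ _ (fun j => if Nat.eqb j k then c * cos (INR k * x) else 0)).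
  - apply sum1_single; auto.
  - intros j; destruct (Nat.eqb_spec j k); subst; auto. ring.
Qed.

Theorem mainTheorem7 (h N : nat) (hh : (3 <= h)%nat) (hN : (1 <= N)%nat) :
  psi_ge N h h
    ((1 / cos (PI / INR h)) * (4 / (3 - cos (PI / INR h)) - 1)).
Proof.
  intros A [HAne [_ HAin]] u Hu.
  set (c0 := cos (PI / INR h)).
  assert (PI2 := PI_RGT_0).
  assert (Hhp : 3 <= INR h) by (assert (H3 := le_INR 3 h ltac:(lia)); simpl in H3; lra).
  assert (HNp : 1 <= INR N) by (assert (H3 := le_INR 1 N ltac:(lia)); simpl in H3; lra).
  assert (Hc0 : 0 < c0).
  { unfold c0; apply cos_gt_0.
    - assert (0 < PI / INR h) by (apply Rdiv_lt_0_compat; lra). lra.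
    - apply Rmult_lt_reg_r with (INR h); [lra|]. unfold Rdiv.
      rewrite Rmult_assoc, Rinv_l by lra. nra. }
  assert (Hc1 : c0 <= 1) by (unfold c0; apply COS_bound).
  set (X := fun a : nat => (INR a - (INR N + 1) / 2) * (2 * PI / (INR h * INR N))).
  set (n := INR (length A)).
  assert (Hn : 0 < n).
  { unfold n; destruct A; [congruence|]. simpl length. rewrite S_INR.
    assert (H := pos_INR (length A)). lra. }
  assert (HX : forall a, In a A -> Rabs (X a) <= PI / INR h).
  { intros a Ha. destruct (HAin a Ha) as [H1 H2].
    apply (le_INR 1) in H1. apply le_INR in H2. simpl in H1.
    set (q := PI / (INR h * INR N)).
    assert (Hq : 0 < q) by (unfold q; apply Rdiv_lt_0_compat; nra).
    assert (E1 : X a = (2 * INR a - INR N - 1) * q) by (unfold X, q; field; lra).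
    assert (E2 : PI / INR h = INR N * q) by (unfold q; field; lra).
    rewrite E1, E2. apply Rabs_le. split; nra. }
  set (T := (1 + c0) / (3 - c0)).
  replace ((1 / c0) * (4 / (3 - c0) - 1)) with (T / c0) by (unfold T; field; lra).
  set (S1 := Lsum (fun a => cos (X a)) A).
  set (S2 := Lsum (fun a => cos (INR h * X a)) A).
  assert (HS : (1 + c0) / 2 * n + (1 - c0) / 2 * S2 <= S1).
  { unfold S1, S2, n. rewrite <- Lsum_lin. apply Lsum_le.
    intros a Ha. apply key_ineq; [lia|]. apply HX; auto. }
  assert (HT : 0 < T) by (unfold T; apply Rdiv_lt_0_compat; lra).
  destruct (Rle_lt_dec S2 (- T * n)) as [Hle|Hlt].
  -
    assert (Hr : ratio_set N h h A ((- (1 / c0)) * S2 / n)).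
    { exists (bsingle h (- (1 / c0))). split.
      - apply in_FKh_single; [lia|]. rewrite Rabs_Ropp, Rabs_right; [reflexivity|].
        left; apply Rdiv_lt_0_compat; lra.
      - unfold n. f_equal. change (wF N h h (bsingle h (- (1 / c0))) A) with (Lsum (fun a => Fval h (bsingle h (- (1 / c0))) (X a)) A).
        rewrite (Lsum_ext _ (fun a => (- (1/c0)) * cos (INR h * X a))).
        + rewrite Lsum_scal. reflexivity.
        + intros a. apply Fval_single. lia. }
    specialize (Hu _ Hr).
    enough (T / c0 <= - (1 / c0) * S2 / n) by lra.
    replace (- (1 / c0) * S2 / n) with ((- S2 / n) / c0) by (field; lra).
    apply Rmult_le_compat_r; [left; apply Rinv_0_lt_compat; lra|].
    apply Rmult_le_reg_r with n; [lra|]. unfold Rdiv. rewrite Rmult_assoc, Rinv_l by lra. lra.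
  - assert (Hr : ratio_set N h h A ((1 / c0) * S1 / n)).
    { exists (bsingle 1 (1 / c0)). split.
      - apply in_FKh_single; [lia|]. rewrite Rabs_right; [reflexivity|].
        left; apply Rdiv_lt_0_compat; lra.
      - unfold n. f_equal. change (wF N h h (bsingle 1 (1 / c0)) A) with (Lsum (fun a => Fval h (bsingle 1 (1 / c0)) (X a)) A).
        rewrite (Lsum_ext _ (fun a => (1/c0) * cos (X a))).
        + rewrite Lsum_scal. reflexivity.
        + intros a. rewrite Fval_single by lia. simpl INR. rewrite Rmult_1_l. reflexivity. }
    specialize (Hu _ Hr).
    enough (T / c0 <= (1 / c0) * S1 / n) by lra.
    replace ((1 / c0) * S1 / n) with ((S1 / n) / c0) by (field; lra).
    apply Rmult_le_compat_r; [left; apply Rinv_0_lt_compat; lra|].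
    apply Rmult_le_reg_r with n; [lra|]. unfold Rdiv. rewrite Rmult_assoc, Rinv_l by lra.
    assert (HT2 : T = (1 + c0) / 2 - (1 - c0) / 2 * T) by (unfold T; field; lra).
    assert (0 <= (1 - c0) / 2 * (S2 + T * n)) by (apply Rmult_le_pos; lra).
    nra.
Qed.
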